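(* Let $R$ be an associative ring with identity. Suppose that at least one of the following two conditions holds: (1) for every $c \in R$ and every $x \in R$ such that $yx - 1 \in Rc$ for some $y \in R$, there exists a left unit $u \in R$ with $x - u \in Rc$; (2) for every $c \in R$ and every $x \in R$ such that $xy - 1 \in cR$ for some $y \in R$, there exists a right unit $u \in R$ with $x - u \in cR$. Then $R$ is directly finite, i.e. for all $a,b \in R$, $ab = 1$ implies $ba = 1$.
   Context: An element $u \in R$ is a left unit if there exists $v \in R$ with $vu = 1$, and a right unit if there exists $v \in R$ with $uv = 1$. Condition (1) is what the paper calls ''every left unit lifts modulo every left principal ideal'', and condition (2) is what it calls ''every right unit lifts modulo every right principal ideal''. *)

(* Defs.v *)
From mathcomp Require Import all_boot all_algebra.
Set Implicit Arguments. Unset Strict Implicit. Unset Printing Implicit Defensive.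
Import GRing.Theory.
Local Open Scope ring_scope.

Definition left_unit (R : pzRingType) (u : R) : Prop := exists v : R, v * u = 1.
Definition right_unit (R : pzRingType) (u : R) : Prop := exists v : R, u * v = 1.
Definition in_lprinc (R : pzRingType) (c z : R) : Prop := exists r : R, z = r * c.
Definition in_rprinc (R : pzRingType) (c z : R) : Prop := exists r : R, z = c * r.

Definition left_units_lift (R : pzRingType) : Prop :=
  forall c x : R, (exists y : R, in_lprinc c (y * x - 1)) ->
    exists u : R, left_unit u /\ in_lprinc c (x - u).

Definition right_units_lift (R : pzRingType) : Prop :=
  forall c x : R, (exists y : R, in_rprinc c (x * y - 1)) ->
    exists u : R, right_unit u /\ in_rprinc c (x - u).

Definition directly_finite (R : pzRingType) : Prop :=
  forall a b : R, a * b = 1 -> b * a = 1.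

(* Main.v *)
Require Import Defs.
From mathcomp Require Import all_boot all_algebra.
Local Open Scope ring_scope.
Import GRing.Theory.

Theorem lemma2 (R : pzRingType) :
  left_units_lift R \/ right_units_lift R -> directly_finite R.
Proof.
move=> [H|H] a b ab1.
- have [u [[v vu] [r ar]]] : exists u : R, left_unit u /\ in_lprinc (1 - b * a) (a - u).
    apply: H; exists b; exists (-1); by rewrite mulN1r opprB.
  have eb : (1 - b * a) * b = 0 by rewrite mulrBl mul1r -mulrA ab1 mulr1 subrr.
  have ub : u * b = 1.
    have : (a - u) * b = 0 by rewrite ar -mulrA eb mulr0.
    by rewrite mulrBl ab1 => /eqP; rewrite subr_eq0 => /eqP <-.
  have vb : v = b by rewrite -[v]mulr1 -ub mulrA vu mul1r.
  have au : a = u by rewrite -[a]mulr1 -vu vb mulrA ab1 mul1r.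
  by rewrite au -vb vu.
- have [u [[v uv] [r br]]] : exists u : R, right_unit u /\ in_rprinc (1 - b * a) (b - u).
    apply: H; exists a; exists (-1); by rewrite mulrN1 opprB.
  have ae : a * (1 - b * a) = 0 by rewrite mulrBr mulr1 mulrA ab1 mul1r subrr.
  have au : a * u = 1.
    have : a * (b - u) = 0 by rewrite br mulrA ae mul0r.
    by rewrite mulrBr ab1 => /eqP; rewrite subr_eq0 => /eqP <-.
  have av : a = v by rewrite -[v]mul1r -au -mulrA uv mulr1.
  have bu : b = u by rewrite -[b]mul1r -uv -av -mulrA ab1 mulr1.
  by rewrite bu av uv.
Qed.
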